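(* Let $\mathcal X,\mathcal U$ be finite nonempty sets, $f:\mathcal X\times\mathcal U\to\mathcal X$ and $g:\mathcal X\to\mathbb R$. Then for all $x\in\mathcal X$, $$\max_{\pi\in\Pi}\min_{\tau\in\mathbb N} g(\xi_x^\pi(\tau))=\max_{\mathbf u\in\mathbb U}\min_{\tau\in\mathbb N} g(\xi_x^{\mathbf u}(\tau)).$$
   Context: $\mathbb N=\{0,1,\dots\}$; $\Pi$ is the set of maps $\mathcal X\to\mathcal U$; $\mathbb U$ is the set of sequences $\mathbb N\to\mathcal U$. For $\pi\in\Pi$: $\xi_x^\pi(0)=x$, $\xi_x^\pi(t+1)=f(\xi_x^\pi(t),\pi(\xi_x^\pi(t)))$. For $\mathbf u\in\mathbb U$: $\xi_x^{\mathbf u}(0)=x$, $\xi_x^{\mathbf u}(t+1)=f(\xi_x^{\mathbf u}(t),\mathbf u(t))$. *)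

(* Defs.v *)
From mathcomp Require Import all_boot all_order all_algebra.
From mathcomp Require Import reals.
Set Implicit Arguments. Unset Strict Implicit. Unset Printing Implicit Defensive.
Import Order.TTheory GRing.Theory Num.Theory.
Local Open Scope ring_scope.

Fixpoint xi_pol (X U : Type) (f : X -> U -> X) (pi : X -> U) (x : X) (t : nat) : X :=
  match t with
  | 0 => x
  | t'.+1 => let y := xi_pol f pi x t' in f y (pi y)
  end.

Fixpoint xi_seq (X U : Type) (f : X -> U -> X) (u : nat -> U) (x : X) (t : nat) : X :=
  match t with
  | 0 => x
  | t'.+1 => f (xi_seq f u x t') (u t')
  end.

Definition is_min_nat (R : realType) (h : nat -> R) (m : R) : Prop :=
  (exists t, h t = m) /\ (forall t, m <= h t).

Definition is_max_of_mins (R : realType) (A : Type) (h : A -> nat -> R) (v : R) : Prop :=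
  (forall a, exists m, is_min_nat (h a) m) /\
  (exists a, is_min_nat (h a) v) /\
  (forall a m, is_min_nat (h a) m -> m <= v).

(* Main.v *)
Require Import Defs.
From mathcomp Require Import all_boot all_order all_algebra.
From mathcomp Require Import boolp reals.
Local Open Scope ring_scope.
Import Order.TTheory GRing.Theory Num.Theory.

Lemma fin_max (R : realType) (X : finType) (g : X -> R) (P : X -> Prop) y0 :
  P y0 -> exists y, P y /\ forall z, P z -> g z <= g y.
Proof.
move=> Py0.
have Py0' : `[< P y0 >] by apply/asboolP.
case: (@arg_maxP _ _ _ y0 (fun z => `[< P z >]) g Py0') => y /asboolP Py Hy.
exists y; split => // z Pz; apply: Hy; exact/asboolP.
Qed.

Lemma fin_min (R : realType) (X : finType) (g : X -> R) (P : X -> Prop) y0 :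
  P y0 -> exists y, P y /\ forall z, P z -> g y <= g z.
Proof.
move=> Py0.
have Py0' : `[< P y0 >] by apply/asboolP.
case: (@arg_minP _ _ _ y0 (fun z => `[< P z >]) g Py0') => y /asboolP Py Hy.
exists y; split => // z Pz; apply: Hy; exact/asboolP.
Qed.

Lemma min_exists (R : realType) (X : finType) (g : X -> R) (h : nat -> X) :
  exists m, is_min_nat (fun t => g (h t)) m.
Proof.
have [y [[t Ht] Hy]] := @fin_min _ _ g (fun y => exists t, h t = y) (h 0%N) (ex_intro _ 0%N erefl).
exists (g y); split; first by exists t; rewrite Ht.
by move=> s; apply: Hy; exists s.
Qed.

Lemma pol_as_seq (X U : Type) (f : X -> U -> X) pi x t :
  xi_pol f pi x t = xi_seq f (fun s => pi (xi_pol f pi x s)) x t.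
Proof. by elim: t => //= t ->. Qed.

Lemma seq_shift (X U : Type) (f : X -> U -> X) u y t :
  xi_seq f u y t.+1 = xi_seq f (fun s => u s.+1) (f y (u 0%N)) t.
Proof. by elim: t => //= t ->. Qed.

Lemma min_eq (R : realType) (h1 h2 : nat -> R) m :
  (forall t, h1 t = h2 t) -> is_min_nat h1 m -> is_min_nat h2 m.
Proof.
move=> E [[t Ht] H]; split; first by exists t; rewrite -E.
by move=> s; rewrite -E.
Qed.

Lemma min_uniq (R : realType) (h : nat -> R) m1 m2 :
  is_min_nat h m1 -> is_min_nat h m2 -> m1 = m2.
Proof.
move=> [[t1 H1] L1] [[t2 H2] L2]; apply/le_anti/andP; split.
  by rewrite -H2; apply: L1.
by rewrite -H1; apply: L2.
Qed.

Theorem mainTheorem4 (R : realType) (X U : finType)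
  (HX : (0 < #|X|)%N) (HU : (0 < #|U|)%N)
  (f : X -> U -> X) (g : X -> R) (x : X) :
  exists v : R,
    is_max_of_mins (fun (pi : X -> U) (t : nat) => g (xi_pol f pi x t)) v /\
    is_max_of_mins (fun (u : nat -> U) (t : nat) => g (xi_seq f u x t)) v.
Proof.
case/card_gt0P: HU => a0 _.
set Pv := fun y : X => exists u, is_min_nat (fun t => g (xi_seq f u x t)) (g y).
have [m0 Hm0] := @min_exists _ _ g (xi_seq f (fun _ => a0) x).
have Pm0 : exists y, Pv y.
  case: (Hm0) => [[t Ht] _]; exists (xi_seq f (fun _ => a0) x t).
  by exists (fun _ => a0); rewrite Ht.
case: Pm0 => y0 Py0.
have [ys [[us Hus] Hys]] := @fin_max _ _ g Pv _ Py0.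
set v := g ys.
have Hub : forall u m, is_min_nat (fun t => g (xi_seq f u x t)) m -> m <= v.
  move=> u m Hm; case: (Hm) => [[t Ht] _].
  rewrite -Ht; apply: Hys; exists u; by rewrite Ht.
set viable := fun y : X => exists u, forall t, v <= g (xi_seq f u y t).
have Vx : viable x by exists us; case: Hus.
have step : forall y, exists a, viable y -> viable (f y a).
  move=> y; case: (pselect (viable y)) => [[u Hu]|nV]; last by exists a0.
  exists (u 0%N) => _; exists (fun s => u s.+1) => t.
  by rewrite -seq_shift.
have [pi Hpi] := choice step.
have Vtraj : forall t, viable (xi_pol f pi x t).
  by elim=> //= t IH; apply: Hpi.
have Hpol_ub : forall p m, is_min_nat (fun t => g (xi_pol f p x t)) m -> m <= v.
  move=> p m Hm; apply: (Hub (fun s => p (xi_pol f p x s))).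
  apply: min_eq Hm => t; by rewrite pol_as_seq.
exists v; split; split.
- move=> p; exact: min_exists.
- split => //.
  exists pi.
  have [m Hm] := @min_exists _ _ g (xi_pol f pi x).
  suff -> : v = m by [].
  apply/le_anti/andP; split; last exact: Hpol_ub Hm.
  case: Hm => [[t Ht] _]; rewrite -Ht.
  by case: (Vtraj t) => u /(_ 0%N).
- move=> u; exact: min_exists.
- by split => //; exists us.
Qed.
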